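(* Let $p: E \to B$ be a weak homology fibration of simplicial sets and let $f: B' \to B$ be a fibration. Then the pull-back $p': E' = B' \times_B E \to B'$ of $p$ along $f$ is again a weak homology fibration.
   Context: Spaces are simplicial sets. For a map $p: E \to B$ and an $n$-simplex $\sigma: \Delta[n] \to B$, $dp(\sigma)$ denotes the pull-back of $\Delta[n] \xrightarrow{\sigma} B \xleftarrow{p} E$ (the ''preimage'' of $\sigma$). A map $p: E \to B$ is a weak homology fibration if for every simplex $\sigma$ of $B$ and every simplicial operation $\theta$ (so that $\theta\sigma = \sigma\circ\theta$), the natural map between $dp(\theta\sigma)$ and $dp(\sigma)$ induces an isomorphism in integral homology. Homology means integral homology. *)

(* Defs.v *)
From HB Require Import structures.
From mathcomp Require Import all_boot all_order all_algebra.
From Stdlib Require Import ClassicalEpsilon ProofIrrelevance.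
Set Implicit Arguments. Unset Strict Implicit. Unset Printing Implicit Defensive.
Import GRing.Theory.

Definition monob m n (f : 'I_m.+1 -> 'I_n.+1) : bool :=
  [forall i : 'I_m.+1, forall j : 'I_m.+1, (i <= j) ==> (f i <= f j)].

Definition Mono m n := {f : {ffun 'I_m.+1 -> 'I_n.+1} | monob f}.
Definition mfun m n (a : Mono m n) : 'I_m.+1 -> 'I_n.+1 := fun i => sval a i.

Lemma monoP m n (f : 'I_m.+1 -> 'I_n.+1) :
  monob f -> forall i j : 'I_m.+1, i <= j -> f i <= f j.
Proof. by move=> /forallP H i j le; move: (H i) => /forallP /(_ j) /implyP; apply. Qed.

Lemma monob_ffun m n (f : 'I_m.+1 -> 'I_n.+1) :
  (forall i j : 'I_m.+1, i <= j -> f i <= f j) -> monob [ffun i => f i].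
Proof. move=> H; apply/forallP=> i; apply/forallP=> j; apply/implyP=> le; rewrite !ffunE; exact: H. Qed.

Definition mid n : Mono n n := exist _ [ffun i => i] (monob_ffun (fun i j (h : i <= j) => h)).

Lemma mcomp_mono k m n (a : Mono m n) (b : Mono k m) :
  forall i j : 'I_k.+1, i <= j -> mfun a (mfun b i) <= mfun a (mfun b j).
Proof.
move=> i j le; rewrite /mfun; apply: (monoP (valP a)); exact: (monoP (valP b)).
Qed.

Definition mcomp k m n (a : Mono m n) (b : Mono k m) : Mono k n :=
  exist _ [ffun i => mfun a (mfun b i)] (monob_ffun (@mcomp_mono k m n a b)).

Lemma mcompE k m n (a : Mono m n) (b : Mono k m) i :
  mfun (mcomp a b) i = mfun a (mfun b i).
Proof. by rewrite /mfun /= ffunE. Qed.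

Lemma mono_ext m n (a b : Mono m n) : (forall i, mfun a i = mfun b i) -> a = b.
Proof. by move=> H; apply: val_inj; apply/ffunP. Qed.

Lemma mcompA j k m n (a : Mono m n) (b : Mono k m) (c : Mono j k) :
  mcomp a (mcomp b c) = mcomp (mcomp a b) c.
Proof. by apply: mono_ext=> i; rewrite !mcompE. Qed.

Lemma mcomp1 m n (a : Mono m n) : mcomp a (mid m) = a.
Proof. by apply: mono_ext=> i; rewrite mcompE /mfun /= ffunE. Qed.

Record sSet := SSet {
  obj :> nat -> Type;
  act : forall m n, Mono m n -> obj n -> obj m;
  act_id : forall n x, act (mid n) x = x;
  act_comp : forall k m n (a : Mono m n) (b : Mono k m) x,
      act (mcomp a b) x = act b (act a x) }.
Arguments act {s m n}.

Record sMap (X Y : sSet) := SMap {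
  smap : forall {n}, X n -> Y n;
  smap_nat : forall m n (a : Mono m n) x, smap (act a x) = act a (smap x) }.
Arguments smap {X Y} s {n}.

Lemma simplex_comp n k m j (a : Mono m j) (b : Mono k m) (x : Mono j n) :
  mcomp x (mcomp a b) = mcomp (mcomp x a) b.
Proof. exact: mcompA. Qed.

Definition Simplex (n : nat) : sSet :=
  @SSet (fun m => Mono m n) (fun m k a x => mcomp x a)
        (fun k x => mcomp1 x) (@simplex_comp n).

Definition hornb n (k : 'I_n.+1) m (a : Mono m n) : bool :=
  [exists j : 'I_n.+1, (j != k) && [forall i : 'I_m.+1, mfun a i != j]].

Lemma hornb_comp n (k : 'I_n.+1) m j (a : Mono j n) (b : Mono m j) :
  hornb k a -> hornb k (mcomp a b).
Proof.
move=> /existsP [l /andP [lk /forallP H]]; apply/existsP; exists l.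
by rewrite lk /=; apply/forallP=> i; rewrite /mfun /= ffunE; apply: H.
Qed.

Definition horn_act n (k : 'I_n.+1) m j (a : Mono m j)
  (x : {b : Mono j n | hornb k b}) : {b : Mono m n | hornb k b} :=
  exist _ (mcomp (sval x) a) (hornb_comp a (valP x)).

Lemma horn_id n (k : 'I_n.+1) j (x : {b : Mono j n | hornb k b}) :
  @horn_act n k j j (mid j) x = x.
Proof. by apply: val_inj; rewrite /= mcomp1. Qed.

Lemma horn_comp n (k : 'I_n.+1) i m j (a : Mono m j) (b : Mono i m)
  (x : {b : Mono j n | hornb k b}) :
  horn_act (mcomp a b) x = horn_act b (horn_act a x).
Proof. by apply: val_inj; rewrite /= mcompA. Qed.

Definition Horn n (k : 'I_n.+1) : sSet :=
  @SSet (fun m => {b : Mono m n | hornb k b}) (@horn_act n k)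
        (@horn_id n k) (@horn_comp n k).

Definition horn_incl n (k : 'I_n.+1) : sMap (Horn k) (Simplex n) :=
  @SMap (Horn k) (Simplex n) (fun m x => sval x) (fun m j a x => erefl).

Definition kan_fibration (X Y : sSet) (f : sMap X Y) : Prop :=
  forall (n : nat) (k : 'I_n.+1), 0 < n ->
  forall (u : sMap (Horn k) X) (v : sMap (Simplex n) Y),
    (forall m (x : Horn k m), smap f (smap u x) = smap v (smap (@horn_incl n k) x)) ->
    exists w : sMap (Simplex n) X,
      (forall m (x : Horn k m), smap w (smap (@horn_incl n k) x) = smap u x) /\
      (forall m (x : Simplex n m), smap f (smap w x) = smap v x).

Lemma sig_eq T (P : T -> Prop) (x y : sig P) : sval x = sval y -> x = y.
Proof. case: x y => [x hx] [y hy] /= e; subst y; f_equal; exact: proof_irrelevance. Qed.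

Section Pullback.
Variables (A E B : sSet) (f : sMap A B) (p : sMap E B).

Definition pb_obj m := {x : A m * E m | smap f x.1 = smap p x.2}.

Lemma pb_act_proof m n (a : Mono m n) (x : pb_obj n) :
  smap f (act a (sval x).1) = smap p (act a (sval x).2).
Proof. by rewrite !smap_nat (proj2_sig x). Qed.

Definition pb_act m n (a : Mono m n) (x : pb_obj n) : pb_obj m :=
  exist _ (act a (sval x).1, act a (sval x).2) (pb_act_proof a x).

Lemma pb_id n (x : pb_obj n) : pb_act (mid n) x = x.
Proof. by apply: sig_eq; rewrite /= !act_id; case: (sval x). Qed.

Lemma pb_comp k m n (a : Mono m n) (b : Mono k m) (x : pb_obj n) :
  pb_act (mcomp a b) x = pb_act b (pb_act a x).
Proof. by apply: sig_eq; rewrite /= !act_comp. Qed.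

Definition pullback : sSet := @SSet pb_obj pb_act pb_id pb_comp.

(* its projection onto A, i.e. the pull-back of p along f *)
Definition pb_fst : sMap pullback A :=
  @SMap pullback A (fun n x => (sval x).1) (fun m n a x => erefl).
End Pullback.

Definition yon (B : sSet) n (s : B n) : sMap (Simplex n) B :=
  @SMap (Simplex n) B (fun m a => act a s)
        (fun m k a x => act_comp x a s).

Definition dp (E B : sSet) (p : sMap E B) n (s : B n) : sSet :=
  pullback (yon s) p.

Section DpMap.
Variables (E B : sSet) (p : sMap E B) (n m : nat) (s : B n) (t : Mono m n).

Lemma dp_map_proof k (x : dp p (act t s) k) :
  smap (yon s) (mcomp t (sval x).1) = smap p (sval x).2.
Proof. by rewrite /= act_comp; exact: (proj2_sig x). Qed.

Definition dp_map_fun k (x : dp p (act t s) k) : dp p s k :=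
  exist _ (mcomp t (sval x).1, (sval x).2) (dp_map_proof x).

Lemma dp_map_nat k l (a : Mono k l) (x : dp p (act t s) l) :
  dp_map_fun (act a x) = act a (dp_map_fun x).
Proof. by apply: sig_eq; rewrite /= mcompA. Qed.

Definition dp_map : sMap (dp p (act t s)) (dp p s) :=
  @SMap (dp p (act t s)) (dp p s) dp_map_fun dp_map_nat.
End DpMap.

Local Open Scope ring_scope.

(* integral n-chains: finite formal Z-linear combinations of n-simplices *)
Definition chain (X : sSet) n := seq (int * X n).

Definition coef (X : sSet) n (c : chain X n) (y : X n) : int :=
  \sum_(q <- c) (if excluded_middle_informative (q.2 = y) then q.1 else 0).

Lemma face_mono n (i : 'I_n.+2) :
  forall j k : 'I_n.+1, (j <= k)%N -> (lift i j <= lift i k)%N.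
Proof. by move=> j k le; rewrite /= leq_bump2. Qed.

Definition face n (i : 'I_n.+2) : Mono n n.+1 :=
  exist _ [ffun j => lift i j] (monob_ffun (@face_mono n i)).

Definition bd (X : sSet) n (c : chain X n.+1) : chain X n :=
  flatten [seq [seq (((-1) ^+ (nat_of_ord i) * q.1)%R, act (face i) q.2)
                | i : 'I_n.+2 <- enum 'I_n.+2]
          | q : int * X n.+1 <- c].

Definition push (X Y : sSet) (g : sMap X Y) n (c : chain X n) : chain Y n :=
  [seq (q.1, smap g q.2) | q <- c].

Definition csub (X : sSet) n (c d : chain X n) : chain X n :=
  c ++ [seq (- q.1, q.2) | q <- d].

Definition is_cycle (X : sSet) n : chain X n -> Prop :=
  match n return chain X n -> Prop with
  | 0 => fun _ => True
  | k.+1 => fun c => forall y, coef (bd c) y = 0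
  end.

Definition is_bdry (X : sSet) n (c : chain X n) : Prop :=
  exists t : chain X n.+1, forall y, coef (bd t) y = coef c y.

(* g induces an isomorphism H_n(X;Z) -> H_n(Y;Z) for every n
   (surjectivity and injectivity on homology classes) *)
Definition homology_iso (X Y : sSet) (g : sMap X Y) : Prop :=
  forall n : nat,
    (forall z : chain Y n, is_cycle z ->
       exists z' : chain X n, is_cycle z' /\ is_bdry (csub z (push g z'))) /\
    (forall z' : chain X n, is_cycle z' -> is_bdry (push g z') -> is_bdry z').

Definition weak_homology_fibration (E B : sSet) (p : sMap E B) : Prop :=
  forall (n : nat) (s : B n) (m : nat) (t : Mono m n),
    homology_iso (dp_map p s t).

(* Main.v *)
Require Import Defs.
From mathcomp Require Import all_boot all_order all_algebra.
From Stdlib Require Import ClassicalEpsilon ProofIrrelevance.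
Set Implicit Arguments. Unset Strict Implicit. Unset Printing Implicit Defensive.
Import GRing.Theory.
Local Open Scope ring_scope.

Section Chains.
Variables (X Y : sSet).

Lemma push_bd (phi : sMap X Y) n (c : chain X n.+1) :
  push phi (bd c) = bd (push phi c).
Proof.
rewrite /bd /push map_flatten -!map_comp; congr flatten; apply: eq_map => q /=.
rewrite -map_comp; apply: eq_map => i /=; by rewrite smap_nat.
Qed.

Lemma push_csub (phi : sMap X Y) n (c d : chain X n) :
  push phi (csub c d) = csub (push phi c) (push phi d).
Proof. by rewrite /csub /push map_cat -!map_comp. Qed.

Lemma coef_push (phi : sMap X Y) (psi : sMap Y X) n (c : chain X n) (y : Y n) :
  (forall x, smap psi (smap phi x) = x :> X n) ->
  (forall y, smap phi (smap psi y) = y :> Y n) ->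
  coef (push phi c) y = coef c (smap psi y).
Proof.
move=> K1 K2; rewrite /coef /push big_map; apply: eq_bigr => q _ /=.
case: excluded_middle_informative => e1; case: excluded_middle_informative => e2 //.
- by exfalso; apply: e2; rewrite -e1 K1.
- by exfalso; apply: e1; rewrite e2 K2.
Qed.

Lemma bdry_push (phi : sMap X Y) (psi : sMap Y X) n (c : chain X n) :
  (forall n x, smap psi (smap phi x) = x :> X n) ->
  (forall n y, smap phi (smap psi y) = y :> Y n) ->
  is_bdry c -> is_bdry (push phi c).
Proof.
move=> K1 K2 [t Ht]; exists (push phi t) => y.
by rewrite -push_bd !(coef_push _ _ (K1 _) (K2 _)) Ht.
Qed.

Lemma cycle_push (phi : sMap X Y) (psi : sMap Y X) n (c : chain X n) :
  (forall n x, smap psi (smap phi x) = x :> X n) ->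
  (forall n y, smap phi (smap psi y) = y :> Y n) ->
  is_cycle c -> is_cycle (push phi c).
Proof.
move=> K1 K2; case: n c => [|n] c //= H y.
by rewrite -push_bd (coef_push _ _ (K1 _) (K2 _)) H.
Qed.
End Chains.

Lemma push_push (X Y Z : sSet) (phi : sMap Y Z) (chi : sMap X Y) n (c : chain X n) :
  push phi (push chi c) = [seq (q.1, smap phi (smap chi q.2)) | q <- c].
Proof. by rewrite /push -map_comp. Qed.

Lemma push_id (X : sSet) (phi : sMap X X) n (c : chain X n) :
  (forall x, smap phi x = x :> X n) -> push phi c = c.
Proof. move=> K; rewrite /push -[RHS]map_id; apply: eq_map => -[a b] /=; by rewrite K. Qed.

Lemma push_pushK (X Y : sSet) (phi : sMap Y X) (chi : sMap X Y) n (c : chain X n) :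
  (forall x, smap phi (smap chi x) = x :> X n) -> push phi (push chi c) = c.
Proof. move=> K; rewrite push_push -[RHS]map_id; apply: eq_map => -[a b] /=; by rewrite K. Qed.

Lemma transfer (X X' Y Y' : sSet) (g : sMap X' Y') (h : sMap X Y)
  (a : sMap X' X) (a' : sMap X X') (b : sMap Y' Y) (b' : sMap Y Y') :
  (forall n x, smap a' (smap a x) = x :> X' n) ->
  (forall n x, smap a (smap a' x) = x :> X n) ->
  (forall n x, smap b' (smap b x) = x :> Y' n) ->
  (forall n x, smap b (smap b' x) = x :> Y n) ->
  (forall n x, smap h (smap a x) = smap b (smap g x) :> Y n) ->
  homology_iso h -> homology_iso g.
Proof.
move=> A1 A2 B1 B2 C H n; have [Hs Hi] := H n; split.
- move=> z zc.
  have [z'' [z''c bz]] := Hs _ (cycle_push B1 B2 zc).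
  exists (push a' z''); split; first exact: (cycle_push A2 A1 z''c).
  have := bdry_push B2 B1 bz.
  have -> // : push b' (csub (push b z) (push h z'')) = csub z (push g (push a' z'')).
  rewrite push_csub push_pushK //; congr csub.
  rewrite !push_push; apply: eq_map => q /=.
  by rewrite -{1}(A2 _ q.2) C B1.
- move=> z zc bz.
  have e : push h (push a z) = push b (push g z).
    by rewrite !push_push; apply: eq_map => q; rewrite C.
  have := Hi _ (cycle_push A1 A2 zc).
  rewrite e => /(_ (bdry_push B1 B2 bz)) /(bdry_push A2 A1).
  by rewrite push_pushK.
Qed.

Section Iso.
Variables (E B B' : sSet) (p : sMap E B) (f : sMap B' B).
Variables (n : nat) (s : B' n) (u : B n) (H : smap f s = u).

Definition DP' := dp (pb_fst f p) s.
Definition DP := dp p u.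

Lemma phi_proof k (x : DP' k) :
  smap (yon u) (sval x).1 = smap p (sval (sval x).2).2.
Proof.
case: x => [[a [[b e] he]] hx] /=; rewrite /= in hx.
by rewrite -H -smap_nat hx.
Qed.

Definition phi_fun k (x : DP' k) : DP k :=
  exist _ ((sval x).1, (sval (sval x).2).2) (phi_proof x).

Lemma phi_nat k l (a : Mono k l) (x : DP' l) : phi_fun (act a x) = act a (phi_fun x).
Proof. by apply: sig_eq. Qed.

Definition phi : sMap DP' DP := SMap phi_nat.

Lemma psi_proof1 k (y : DP k) :
  smap f (act (sval y).1 s) = smap p (sval y).2.
Proof. by rewrite smap_nat H; exact: (proj2_sig y). Qed.

Definition psi_fun k (y : DP k) : DP' k :=
  exist _ ((sval y).1, (exist _ (act (sval y).1 s, (sval y).2) (psi_proof1 y)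
     : pullback f p k)) (erefl _).

Lemma psi_nat k l (a : Mono k l) (y : DP l) : psi_fun (act a y) = act a (psi_fun y).
Proof. apply: sig_eq => /=; congr pair; apply: sig_eq => /=; by rewrite act_comp. Qed.

Definition psi : sMap DP DP' := SMap psi_nat.

Lemma psi_phi k (x : DP' k) : smap psi (smap phi x) = x.
Proof.
case: x => [[a [[b e] he]] hx]; have hx' : act a s = b := hx.
apply: sig_eq => /=; congr pair; apply: sig_eq => /=; by rewrite hx'.
Qed.

Lemma phi_psi k (y : DP k) : smap phi (smap psi y) = y.
Proof. by apply: sig_eq; case: y => [[a e] hy]. Qed.
End Iso.

Theorem proposition1p3 (E B B' : sSet) (p : sMap E B) (f : sMap B' B) :
  weak_homology_fibration p -> kan_fibration f ->
  weak_homology_fibration (pb_fst f p).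
Proof.
move=> W _ n s m t.
have Ht : smap f (act t s) = act t (smap f s) by rewrite smap_nat.
apply: (@transfer _ _ _ _ (dp_map (pb_fst f p) s t) (dp_map p (smap f s) t)
   (@phi E B B' p f _ _ _ Ht) (@psi E B B' p f _ _ _ Ht)
   (@phi E B B' p f _ _ _ (erefl (smap f s))) (@psi E B B' p f _ _ _ (erefl (smap f s)))).
- exact: psi_phi.
- exact: phi_psi.
- exact: psi_phi.
- exact: phi_psi.
- by move=> k x; apply: sig_eq.
- exact: W.
Qed.
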